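(* Suppose the distribution $\mathcal{D}$ on $\mathbb{R}^d$ has $(r,\alpha,\gamma)$ margins, and $\mathcal{D}'$ is a distribution on $\mathbb{R}^d$ with $\mathrm{TV}(\mathcal{D},\mathcal{D}')\le\theta$. If $\theta\le\frac12\inf_{\beta\ne0}\Pr_{e\sim\mathcal{D}}[\beta\cdot e>r\|\beta\|+\alpha\|\beta\|]$, then $\mathcal{D}'$ has $(r,\alpha,\gamma/4)$ margins.
   Context: $\mathrm{TV}$ denotes total variation distance. A distribution $\mathcal{D}$ on $\mathbb{R}^d$ has $(r,\alpha,\gamma)$ margins if for all $\beta\ne0$ and all $b\le r\|\beta\|$, with $e\sim\mathcal{D}$, $\Pr[\beta\cdot e>b+\alpha\|\beta\|\mid\beta\cdot e\ge b]\ge\gamma$. *)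

(* Defs.v *)
(* R^d is modeled as d.-tuple R with the product
   (= Borel) sigma-algebra provided by mathcomp-analysis (measurable_tuple). *)
From HB Require Import structures.
From mathcomp Require Import all_boot all_order all_algebra.
From mathcomp Require Import all_classical all_reals all_analysis.
Set Implicit Arguments. Unset Strict Implicit. Unset Printing Implicit Defensive.
Import Order.TTheory GRing.Theory Num.Theory.
Local Open Scope classical_set_scope.
Local Open Scope ring_scope.

Section Defs.
Context {R : realType} {d : nat}.

Definition dotv (x y : d.-tuple R) : R := \sum_(i < d) tnth x i * tnth y i.
Definition enorm (x : d.-tuple R) : R := Num.sqrt (\sum_(i < d) tnth x i ^+ 2).
Definition zerov : d.-tuple R := [tuple (0:R) | _ < d].

Definition Pr (P : probability (d.-tuple R) R) (A : set (d.-tuple R)) : R :=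
  fine (P A).

(* conditional probability Pr[A | B] = Pr[A /\ B] / Pr[B] (0 if Pr[B] = 0) *)
Definition condPr (P : probability (d.-tuple R) R) (A B : set (d.-tuple R)) : R :=
  Pr P (A `&` B) / Pr P B.

Definition TV (P Q : probability (d.-tuple R) R) : R :=
  sup [set `|Pr P A - Pr Q A| | A in [set A : set (d.-tuple R) | measurable A]].

Definition has_margins (P : probability (d.-tuple R) R) (r alpha gamma : R) : Prop :=
  forall beta : d.-tuple R, beta != zerov ->
  forall b : R, b <= r * enorm beta ->
    gamma <= condPr P [set e | b + alpha * enorm beta < dotv beta e]
                      [set e | b <= dotv beta e].

End Defs.

(* Main.v *)
Require Import Defs.
From HB Require Import structures.
From mathcomp Require Import all_boot all_order all_algebra.
From mathcomp Require Import all_classical all_reals all_analysis.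
From mathcomp Require Import lra.
Import Order.TTheory GRing.Theory Num.Theory.
Local Open Scope classical_set_scope.
Local Open Scope ring_scope.

Section Helpers.
Context {R : realType} {d : nat}.
Implicit Types (P : probability (d.-tuple R) R) (A B : set (d.-tuple R)).

Lemma Pr_ge0 P A : 0 <= Pr P A.
Proof. by rewrite /Pr; apply: fine_ge0; apply: measure_ge0. Qed.

Lemma Pr_fin P A : measurable A -> P A \is a fin_num.
Proof. by move=> mA; apply: fin_num_measure. Qed.

Lemma Pr_le1 P A : measurable A -> Pr P A <= 1.
Proof.
move=> mA; rewrite /Pr -[1]/(fine 1%E); apply: fine_le => //.
  exact: Pr_fin.
exact: probability_le1.
Qed.

Lemma Pr_mono P A B : measurable A -> measurable B -> A `<=` B -> Pr P A <= Pr P B.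
Proof.
move=> mA mB AB; rewrite /Pr; apply: fine_le; try exact: Pr_fin.
by apply: le_measure => //; rewrite inE.
Qed.

Lemma mset_lt (beta : d.-tuple R) (c : R) :
  measurable [set e : d.-tuple R | c < dotv beta e].
Proof.
have mf : measurable_fun setT (@dotv R d beta).
  rewrite /dotv; apply: measurable_sum => i.
  apply: measurable_realfun.measurable_funM; first exact: measurable_cst.
  exact: measurable_tnth.
rewrite (_ : [set e | _] = setT `&` dotv beta @^-1` `]c, +oo[%classic).
  by apply: mf => //; exact: measurable_itv.
by rewrite setTI; apply/seteqP; split => x /=; rewrite in_itv /= andbT.
Qed.

Lemma mset_le (beta : d.-tuple R) (c : R) :
  measurable [set e : d.-tuple R | c <= dotv beta e].
Proof.
have mf : measurable_fun setT (@dotv R d beta).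
  rewrite /dotv; apply: measurable_sum => i.
  apply: measurable_realfun.measurable_funM; first exact: measurable_cst.
  exact: measurable_tnth.
rewrite (_ : [set e | _] = setT `&` dotv beta @^-1` `[c, +oo[%classic).
  by apply: mf => //; exact: measurable_itv.
by rewrite setTI; apply/seteqP; split => x /=; rewrite in_itv /= andbT.
Qed.

Lemma TV_bound P Q A : measurable A -> `|Pr P A - Pr Q A| <= TV P Q.
Proof.
move=> mA; rewrite /TV; apply: ub_le_sup; last by exists A.
exists 2 => _ [B mB <-].
have h1 := @Pr_le1 P B mB; have h2 := @Pr_le1 Q B mB.
have h3 := Pr_ge0 P B; have h4 := Pr_ge0 Q B.
rewrite ler_norml; apply/andP; split; lra.
Qed.

End Helpers.

Theorem lemma20 (R : realType) (d : nat)
  (D D' : probability (d.-tuple R) R) (r alpha gamma theta : R) :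
  0 <= alpha ->
  has_margins D r alpha gamma ->
  TV D D' <= theta ->
  theta <= 2^-1 * inf [set Pr D [set e | r * enorm beta + alpha * enorm beta < dotv beta e]
                       | beta in [set beta : d.-tuple R | beta != zerov]] ->
  has_margins D' r alpha (gamma / 4).
Proof.
move=> a0 hm hTV hth beta bne b hb.
set A := [set e | b + alpha * enorm beta < dotv beta e].
set B := [set e | b <= dotv beta e].
set C := [set e | r * enorm beta + alpha * enorm beta < dotv beta e].
have mA : measurable A by apply: mset_lt.
have mB : measurable B by apply: mset_le.
have mC : measurable C by apply: mset_lt.
have n0 : 0 <= enorm beta by rewrite /enorm sqrtr_ge0.
have AB : A `<=` B.
  by move=> x; rewrite /A /B /= => h; apply: ltW; apply: le_lt_trans h; rewrite lerDl mulr_ge0.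
have CA : C `<=` A.
  by move=> x; rewrite /A /C /= => h; apply: le_lt_trans h; rewrite lerD2r.
have hD := hm beta bne b hb.
rewrite /condPr (setIidl AB) in hD *.
have aB := @Pr_mono _ _ D A B mA mB AB.
have aB' := @Pr_mono _ _ D' A B mA mB AB.
have cA := @Pr_mono _ _ D C A mC mA CA.
have tA := @TV_bound _ _ D D' A mA.
have tB := @TV_bound _ _ D D' B mB.
have hinf : inf [set Pr D [set e | r * enorm beta0 + alpha * enorm beta0 < dotv beta0 e]
                       | beta0 in [set beta0 : d.-tuple R | beta0 != zerov]] <= Pr D C.
  apply: ge_inf; last by exists beta.
  by exists 0 => _ [x _ <-]; apply: Pr_ge0.
have g1 := Pr_ge0 D A; have g2 := Pr_ge0 D B; have g3 := Pr_ge0 D' A; have g4 := Pr_ge0 D' B.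
move: hD tA tB hinf aB aB' cA g1 g2 g3 g4.
set a := Pr D A; set bb := Pr D B; set a' := Pr D' A; set b' := Pr D' B; set p := Pr D C.
set I := inf _.
move=> hD tA tB hinf aB aB' cA g1 g2 g3 g4.
have ht : theta <= a / 2 by lra.
move: tA tB; rewrite !ler_norml => /andP[tA1 tA2] /andP[tB1 tB2].
have [gle|ggt] := lerP gamma 0.
  apply: le_trans (_ : 0 <= _); first lra.
  exact: divr_ge0.
have bpos : 0 < bb.
  rewrite lt_neqAle g2 andbT; apply/negP => /eqP b0.
  by move: hD; rewrite -b0 invr0 mulr0 => h; lra.
have hg : gamma * bb <= a by rewrite -ler_pdivlMr.
have apos : 0 < a by apply: lt_le_trans hg; exact: mulr_gt0.
have g1' : gamma <= 1 by rewrite -(ler_pM2r bpos) mul1r; apply: le_trans aB.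
have b'pos : 0 < b' by lra.
have th0 : 0 <= theta by lra.
have e1 : gamma * b' <= gamma * (bb + theta) by apply: ler_wpM2l; lra.
have e2 : gamma * theta <= theta by rewrite ler_piMl.
rewrite ler_pdivlMr //.
have -> : gamma / 4 * b' = (gamma * b') / 4 by rewrite mulrAC.
rewrite ler_pdivrMr; last by [].
rewrite mulrDr in e1; lra.
Qed.
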